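(* Let $I$ be a conditional indicator w.r.t. $\mathcal{H}$ which is increasing and regular, and define for $X\in\mathbb{L}^0(\overline{\mathbb{R}},\mathcal{F})$ $$I^L(X)=\operatorname{ess\,sup}_{\mathcal{H}}\{I(Y):Y\in\mathbb{D}_I,\ Y\le X\},\qquad I^U(X)=\operatorname{ess\,inf}_{\mathcal{H}}\{I(Y):Y\in\mathbb{D}_I,\ Y\ge X\}.$$ Then $I^L$ and $I^U$ are regular.
   Context: Let $(\Omega,\mathcal{F},\mathbb{P})$ be a probability space with $\mathcal{F}$ complete, and $\mathcal{H}\subseteq\mathcal{F}$ a complete sub-$\sigma$-algebra. $\overline{\mathbb{R}}=\mathbb{R}\cup\{\pm\infty\}$ with conventions $r\pm\infty=\pm\infty$, $\infty-\infty=0$, $\infty+\infty=\infty$, $0\times(\pm\infty)=0$; $\mathbb{L}^0(G,\mathcal{G})$ is the set of $\mathcal{G}$-measurable random variables a.s. valued in $G$. For a family $\Gamma$ of random variables, $\operatorname{ess\,sup}_{\mathcal{H}}\Gamma$ is the smallest (a.s.) $\mathcal{H}$-measurable random variable dominating every element of $\Gamma$ a.s., and $\operatorname{ess\,inf}_{\mathcal{H}}\Gamma=-\operatorname{ess\,sup}_{\mathcal{H}}(-\Gamma)$ (with single-variable versions $\operatorname{ess\,sup}_{\mathcal{H}}(X)=\operatorname{ess\,sup}_{\mathcal{H}}\{X\}$). A conditional indicator w.r.t. $\mathcal{H}$ is a map $I:\mathbb{D}_I\to\mathbb{L}^0(\overline{\mathbb{R}},\mathcal{H})$, $0\in\mathbb{D}_I\subseteq\mathbb{L}^0(\overline{\mathbb{R}},\mathcal{F})$,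 with $I(X)\in[\operatorname{ess\,inf}_{\mathcal{H}}(X),\operatorname{ess\,sup}_{\mathcal{H}}(X)]$ a.s. and $\mathbb{D}_I+\mathbb{L}^0(\overline{\mathbb{R}},\mathcal{H})\subseteq\mathbb{D}_I$. Increasing: $X\le Y\Rightarrow I(X)\le I(Y)$. A set is $\mathcal{H}$-decomposable if $X1_H+Y1_{\Omega\setminus H}$ belongs to it whenever $X,Y$ do and $H\in\mathcal{H}$. A map $J$ defined on a domain $\mathbb{D}_J$ is regular if $\mathbb{D}_J$ is $\mathcal{H}$-decomposable and for $X,Y\in\mathbb{D}_J$, $H\in\mathcal{H}$, $X1_H=Y1_H$ implies $J(X)1_H=J(Y)1_H$. *)

(* Defs.v *)
From HB Require Import structures.
From mathcomp Require Import all_boot all_order all_algebra.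
From mathcomp Require Import all_classical all_reals all_analysis measurable_realfun.
Set Implicit Arguments. Unset Strict Implicit. Unset Printing Implicit Defensive.
Import Order.TTheory GRing.Theory Num.Theory.
Local Open Scope classical_set_scope.
Local Open Scope ring_scope.
Local Open Scope ereal_scope.

Section Defs.
Context d (Omega : measurableType d) (R : realType) (P : probability Omega R).

(* The probability space (Omega, F, P): F = the measurable sets of Omega. *)
Definition F_complete : Prop :=
  forall N A : set Omega, measurable N -> P N = 0 -> A `<=` N -> measurable A.

Definition complete_sub_sigma (H : set (set Omega)) : Prop :=
  [/\ sigma_algebra setT H, (forall A, H A -> measurable A)
    & (forall N, measurable N -> P N = 0 -> H N)].

Definition Gmeas (G : set (set Omega)) (X : Omega -> \bar R) : Prop :=
  forall B : set (\bar R), measurable B -> G (X @^-1` B).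

Definition L0F (X : Omega -> \bar R) : Prop := measurable_fun setT X.

Definition eadd0 (x y : \bar R) : \bar R :=
  match x, y with
  | +oo, -oo => 0
  | -oo, +oo => 0
  | _, _ => x + y
  end.

(* X 1_A, with 0 * (+-oo) = 0. *)
Definition restr (A : set Omega) (X : Omega -> \bar R) : Omega -> \bar R :=
  fun w => if pselect (A w) then X w else 0.

Definition glue (A : set Omega) (X Y : Omega -> \bar R) : Omega -> \bar R :=
  fun w => eadd0 (restr A X w) (restr (~` A) Y w).

Definition is_ess_sup (H : set (set Omega)) (Gam : set (Omega -> \bar R))
    (S : Omega -> \bar R) : Prop :=
  [/\ Gmeas H S,
      (forall X, Gam X -> {ae P, forall w, X w <= S w}) &
      (forall S', Gmeas H S' -> (forall X, Gam X -> {ae P, forall w, X w <= S' w}) ->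
         {ae P, forall w, S w <= S' w})].

Definition ess_sup (H : set (set Omega)) (Gam : set (Omega -> \bar R)) :
    Omega -> \bar R :=
  match pselect (exists S, is_ess_sup H Gam S) with
  | left e => projT1 (cid e)
  | right _ => fun _ => 0
  end.

Definition ess_inf (H : set (set Omega)) (Gam : set (Omega -> \bar R)) :
    Omega -> \bar R :=
  fun w => - ess_sup H [set fun v => - X v | X in Gam] w.

Definition cond_indicator (H : set (set Omega)) (D : set (Omega -> \bar R))
    (I : (Omega -> \bar R) -> (Omega -> \bar R)) : Prop :=
  [/\ D (fun _ => 0),
      (forall X, D X -> L0F X),
      (forall X, D X -> Gmeas H (I X)),
      (forall X, D X -> {ae P, forall w,
          ess_inf H [set X] w <= I X w /\ I X w <= ess_sup H [set X] w}) &
      (forall X Z, D X -> Gmeas H Z -> D (fun w => eadd0 (X w) (Z w)))].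

Definition increasing (D : set (Omega -> \bar R))
    (I : (Omega -> \bar R) -> (Omega -> \bar R)) : Prop :=
  forall X Y, D X -> D Y -> {ae P, forall w, X w <= Y w} ->
    {ae P, forall w, I X w <= I Y w}.

Definition decomposable (H : set (set Omega)) (D : set (Omega -> \bar R)) : Prop :=
  forall X Y A, D X -> D Y -> H A -> D (glue A X Y).

Definition regular (H : set (set Omega)) (D : set (Omega -> \bar R))
    (J : (Omega -> \bar R) -> (Omega -> \bar R)) : Prop :=
  decomposable H D /\
  forall X Y A, D X -> D Y -> H A ->
    {ae P, forall w, restr A X w = restr A Y w} ->
    {ae P, forall w, restr A (J X) w = restr A (J Y) w}.

Definition IL (H : set (set Omega)) (D : set (Omega -> \bar R))
    (I : (Omega -> \bar R) -> (Omega -> \bar R)) (X : Omega -> \bar R) :=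
  ess_sup H [set I Y | Y in [set Y | D Y /\ {ae P, forall w, Y w <= X w}]].

Definition IU (H : set (set Omega)) (D : set (Omega -> \bar R))
    (I : (Omega -> \bar R) -> (Omega -> \bar R)) (X : Omega -> \bar R) :=
  ess_inf H [set I Y | Y in [set Y | D Y /\ {ae P, forall w, X w <= Y w}]].

End Defs.

(* Main.v *)
Require Import Defs.
From HB Require Import structures.
From mathcomp Require Import all_boot all_order all_algebra.
From mathcomp Require Import all_classical all_reals all_analysis measurable_realfun.
From mathcomp Require Import lra.
Set Implicit Arguments. Unset Strict Implicit. Unset Printing Implicit Defensive.
Import Order.TTheory GRing.Theory Num.Theory.
Local Open Scope classical_set_scope.
Local Open Scope ring_scope.
Local Open Scope ereal_scope.

Lemma contract_measurable (R : realType) :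
  measurable_fun [set: \bar R] (@contract R).
Proof.
move=> _ Y mY; rewrite setTI.
have c_nd : {homo (fun r : R => contract r%:E) : x y / (x <= y)%R}.
  by move=> x y xy; rewrite le_contract lee_fin.
have mc := nondecreasing_measurable (@measurableT _ R) c_nd.
have mc' : measurable ((fun r : R => contract r%:E) @^-1` Y).
  by have := mc measurableT Y mY; rewrite setTI.
have m1 (x : \bar R) : measurable ([set x] `&` (@contract R @^-1` Y)).
  case: (pselect (Y (contract x))) => Yx.
    rewrite (_ : _ `&` _ = [set x]); first exact: emeasurable_set1.
    by apply/seteqP; split => [z [->]//|z ->].
  rewrite (_ : _ `&` _ = set0) //.
  by apply/seteqP; split => [z [-> ]//|z].
rewrite (_ : _ @^-1` Y = (EFin @` ((fun r : R => contract r%:E) @^-1` Y)) `|`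
   (([set +oo] `&` (@contract R @^-1` Y)) `|` ([set -oo] `&` (@contract R @^-1` Y)))).
  apply: measurableU; first exact: measurable_image_EFin.
  by apply: measurableU; apply: m1.
apply/seteqP; split.
  by case=> [r|//|//] Yr; [left; exists r|right; left|right; right].
by move=> z [[r Yr <-]//|[[-> ]|[-> ]]].
Qed.
Section S.
Context d (Omega : measurableType d) (R : realType) (P : probability Omega R)
  (H : set (set Omega)).
Hypothesis hH : complete_sub_sigma P H.
Implicit Types X Y : Omega -> \bar R.

Local Notation M := (g_sigma_algebraType H).
Local Notation glue := Defs.glue.

Lemma measM (A : set M) : measurable A <-> H A.
Proof.
case: hH => sH _ _.
by rewrite /measurable /= sigma_algebra_id.
Qed.

Lemma GmeasP (X : Omega -> \bar R) :
  Gmeas H X <-> measurable_fun [set: M] (X : M -> \bar R).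
Proof.
split.
  by move=> hX _ B mB; rewrite setTI; apply/measM; exact: hX.
by move=> hX B mB; apply/measM; have := hX measurableT B mB; rewrite setTI.
Qed.

Lemma Gmeas_L0F X : Gmeas H X -> L0F X.
Proof.
case: hH => _ HF _ hX _ B mB; rewrite setTI; exact/HF/hX.
Qed.

Lemma Gmeas_cst (c : \bar R) : Gmeas H (fun _ => c).
Proof. by apply/GmeasP; exact: measurable_cst. Qed.

Lemma Gmeas_if (A : set Omega) X Y : H A -> Gmeas H X -> Gmeas H Y ->
  Gmeas H (fun w => if pselect (A w) then X w else Y w).
Proof.
move=> hA /GmeasP mX /GmeasP mY; apply/GmeasP => _ B mB; rewrite setTI.
have mA : measurable (A : set M) by exact/measM.
rewrite (_ : _ @^-1` B = (A `&` ((X : M -> \bar R) @^-1` B)) `|`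
   (~` A `&` ((Y : M -> \bar R) @^-1` B))).
  apply: measurableU; apply: measurableI => //.
  - by have := mX measurableT B mB; rewrite setTI.
  - exact: measurableC.
  - by have := mY measurableT B mB; rewrite setTI.
apply/seteqP; split => w /=.
  by case: pselect => Aw Bw; [left|right].
by case=> -[Aw Bw]; case: pselect.
Qed.

Lemma GmeasN X : Gmeas H X -> Gmeas H (fun w => - X w).
Proof.
move=> /GmeasP mX; apply/GmeasP; exact: measurableT_comp mX.
Qed.


Definition Sup (f : nat -> Omega -> \bar R) (w : Omega) : \bar R :=
  esups (fun n => f n w) 0%N.

Definition psi (x : \bar R) : \bar R := (contract x + 1)%:E.

Definition V (f : nat -> Omega -> \bar R) : \bar R :=
  \int[P]_w psi (Sup f w).

Lemma Sup_ub f k w : f k w <= Sup f w.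
Proof. by apply: ereal_sup_ubound; exists k. Qed.

Lemma Sup_le f w b : (forall k, f k w <= b) -> Sup f w <= b.
Proof. by move=> h; apply: ge_ereal_sup => _ [k _ <-]. Qed.

Lemma Gmeas_Sup f : (forall n, Gmeas H (f n)) -> Gmeas H (Sup f).
Proof.
move=> hf; apply/GmeasP.
have := @measurable_fun_esups _ M R setT (f : (M -> \bar R)^nat).
by move=> /(_ (fun n => (GmeasP (f n)).1 (hf n)) 0%N).
Qed.

Lemma psi_measurable : measurable_fun [set: \bar R] psi.
Proof.
apply/measurable_EFinP; apply: measurable_funD => //.
exact: contract_measurable.
Qed.

Lemma psi_ge0 x : 0 <= psi x.
Proof.
rewrite /psi lee_fin; have /ler_normlP[h _] := contract_le1 x.
lra.
Qed.

Lemma psi_le2 x : psi x <= 2%:E.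
Proof.
rewrite /psi lee_fin; have /ler_normlP[_ h] := contract_le1 x.
lra.
Qed.

Lemma psi_le x y : x <= y -> psi x <= psi y.
Proof. by move=> xy; rewrite /psi lee_fin lerD2r le_contract. Qed.

Lemma mpsiSup f : (forall n, Gmeas H (f n)) ->
  measurable_fun [set: Omega] (fun w => psi (Sup f w)).
Proof.
move=> hf; apply: (measurableT_comp psi_measurable).
exact: (Gmeas_L0F (Gmeas_Sup hf)).
Qed.

Lemma V_ge0 f : 0 <= V f.
Proof. by apply: integral_ge0 => w _; exact: psi_ge0. Qed.

Lemma V_le2 f : (forall n, Gmeas H (f n)) -> V f <= 2%:E.
Proof.
move=> hf; rewrite /V.
apply: (@le_trans _ _ (\int[P]_(w in setT) (cst 2%:E) w)).
  apply: ge0_le_integral => //.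
  - by move=> w _; exact: psi_ge0.
  - exact: mpsiSup.
  - by move=> w _; exact: psi_le2.
rewrite integral_cst //.
have h1 : forall x : \bar R, x = 1 -> 2%:E * x <= 2%:E by move=> x ->; rewrite mule1.
by apply: h1; exact: probability_setT.
Qed.

Lemma V_le f g : (forall n, Gmeas H (f n)) -> (forall n, Gmeas H (g n)) ->
  (forall w, Sup f w <= Sup g w) -> V f <= V g.
Proof.
move=> hf hg fg; apply: ge0_le_integral => //.
- by move=> w _; exact: psi_ge0.
- exact: mpsiSup.
- exact: mpsiSup.
- by move=> w _; apply: psi_le.
Qed.

Lemma exists_ess_sup (G : set (Omega -> \bar R)) :
  (forall X, G X -> Gmeas H X) -> exists S, is_ess_sup P H G S.
Proof.
move=> hG.
case: (pselect (exists Z, G Z)) => [[Z0 GZ0]|nG]; last first.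
  exists (fun _ => -oo); split.
  - exact: Gmeas_cst.
  - by move=> X GX; exfalso; apply: nG; exists X.
  - by move=> S' _ _; apply: aeW => w; exact: leNye.
pose Vs := [set V f | f in [set f : nat -> Omega -> \bar R | forall n, G (f n)]].
pose s := ereal_sup Vs.
have hGf : forall f : nat -> Omega -> \bar R, (forall n, G (f n)) -> forall n, Gmeas H (f n).
  by move=> f hf n; exact: hG.
have s_ub : forall f, (forall n, G (f n)) -> V f <= s.
  by move=> f hf; apply: ereal_sup_ubound; exists f.
have s_ge0 : 0 <= s.
  by apply: (le_trans (V_ge0 (fun _ => Z0))); apply: s_ub.
have s_le2 : s <= 2%:E.
  by apply: ge_ereal_sup => _ [f hf <-]; apply: V_le2; exact: hGf.
have s_fin : s \is a fin_num.
  by rewrite ge0_fin_numE // (le_lt_trans s_le2) // ltey.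
have adh : forall k : nat, exists f : nat -> Omega -> \bar R,
    (forall n, G (f n)) /\ s - (k.+1%:R^-1)%:E < V f.
  move=> k; have [_ [f hf <-] hlt] := ub_ereal_sup_adherent (S := Vs)
     (e := (k.+1%:R^-1)%R) ltac:(by rewrite invr_gt0) s_fin.
  by exists f.
have [fk hfk] := choice adh.
pose F (n : nat) : Omega -> \bar R :=
  match (unpickle n : option (nat * nat)) with
  | Some p => fk p.1 p.2
  | None => Z0
  end.
have GF : forall n, G (F n).
  by move=> n; rewrite /F; case: (unpickle n) => [[k m]|] //=; exact: (hfk k).1.
have Fk : forall k m, F (pickle (k, m)) = fk k m by move=> k m; rewrite /F pickleK.
have VF : V F = s.
  apply/eqP; rewrite eq_le s_ub //=.
  apply/lee_subgt0Pr => e e0.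
  have [N _ hN] := near_infty_natSinv_lt (PosNum e0).
  have hNe : (N.+1%:R^-1 < e)%R by apply: hN => /=.
  apply: (le_trans _ (@V_le (fk N) F (hGf _ (hfk N).1) (hGf _ GF) _)).
    apply: (le_trans _ (ltW (hfk N).2)).
    by apply: leeB => //; rewrite lee_fin ltW.
  move=> w; apply: Sup_le => m; rewrite -Fk; exact: Sup_ub.
exists (Sup F); split.
- by apply: Gmeas_Sup; exact: hGf.
- move=> Z GZ.
  pose G' (n : nat) := if n is n'.+1 then F n' else Z.
  have GG' : forall n, G (G' n) by case.
  have SG'ge : forall w, Sup F w <= Sup G' w.
    by move=> w; apply: Sup_le => k; exact: (Sup_ub G' k.+1 w).
  have ZG' : forall w, Z w <= Sup G' w by move=> w; exact: (Sup_ub G' 0 w).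
  pose h w := (contract (Sup G' w) - contract (Sup F w))%:E.
  have h_ge0 : forall w, 0 <= h w.
    by move=> w; rewrite /h lee_fin subr_ge0 le_contract.
  have mh : measurable_fun [set: Omega] h.
    apply/measurable_EFinP; apply: measurable_funB.
      apply: (measurableT_comp (@contract_measurable R)).
      exact: (Gmeas_L0F (Gmeas_Sup (hGf _ GG'))).
    apply: (measurableT_comp (@contract_measurable R)).
    exact: (Gmeas_L0F (Gmeas_Sup (hGf _ GF))).
  have VG' : V G' = V F + \int[P]_w h w.
    have e1 := ge0_integralD P measurableT (f1 := fun w => psi (Sup F w)) (f2 := h)
      (fun w _ => psi_ge0 _) (mpsiSup (hGf _ GF)) (fun w _ => h_ge0 w) mh.
    rewrite /V -e1.
    apply: eq_integral => w _; rewrite /psi /h -EFinD; congr EFin; lra.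
  have ih0 : \int[P]_w h w = 0.
    apply/eqP; rewrite eq_le integral_ge0 ?andbT; last by move=> w _; exact: h_ge0.
    have := s_ub _ GG'; rewrite VG' -VF -[leRHS]adde0 leeD2lE //.
    by rewrite VF.
  have : \int[P]_(w in setT) `|h w| = 0.
    by rewrite -ih0; apply: eq_integral => w _; rewrite gee0_abs.
  move/(ae_eq_integral_abs P measurableT mh); apply: filterS => w /(_ I).
  rewrite /h /= => /eqP; rewrite eqe subr_eq0 => /eqP /contract_inj eqw.
  by rewrite -eqw.
- move=> S' _ ub'.
  have := ae_foralln (fun n => ub' (F n) (GF n)).
  apply: filterS => w hw; apply: Sup_le => n; exact: hw.
Qed.

Lemma ess_supP (G : set (Omega -> \bar R)) :
  (forall X, G X -> Gmeas H X) -> is_ess_sup P H G (ess_sup P H G).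
Proof.
move=> hG; rewrite /ess_sup; case: pselect => [e|ne].
  exact: (projT2 (cid e)).
by exfalso; apply: ne; exact: exists_ess_sup.
Qed.

Lemma ess_sup_restr_le (G1 G2 : set (Omega -> \bar R)) (A : set Omega) :
  H A -> (forall X, G1 X -> Gmeas H X) -> (forall X, G2 X -> Gmeas H X) ->
  (forall Z, G1 Z -> exists2 Z', G2 Z' & {ae P, forall w, A w -> Z w = Z' w}) ->
  {ae P, forall w, A w -> ess_sup P H G1 w <= ess_sup P H G2 w}.
Proof.
move=> hA hG1 hG2 hZ.
have [m1 ub1 min1] := ess_supP hG1.
have [m2 ub2 min2] := ess_supP hG2.
set S2 := ess_sup P H G2.
pose S' := fun w => if pselect (A w) then S2 w else +oo.
have mS' : Gmeas H S' by apply: Gmeas_if => //; exact: Gmeas_cst.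
have ubS' : forall X, G1 X -> {ae P, forall w, X w <= S' w}.
  move=> X G1X; have [Z' G2Z' eqZ] := hZ X G1X.
  have := ub2 Z' G2Z'.
  apply: filterS2 eqZ => w eqw lew; rewrite /S'; case: pselect => Aw; last by rewrite leey.
  by rewrite eqw.
have := min1 S' mS' ubS'; apply: filterS => w + Aw.
by rewrite /S'; case: pselect.
Qed.

Lemma ess_sup_restr_eq (G1 G2 : set (Omega -> \bar R)) (A : set Omega) :
  H A -> (forall X, G1 X -> Gmeas H X) -> (forall X, G2 X -> Gmeas H X) ->
  (forall Z, G1 Z -> exists2 Z', G2 Z' & {ae P, forall w, A w -> Z w = Z' w}) ->
  (forall Z, G2 Z -> exists2 Z', G1 Z' & {ae P, forall w, A w -> Z w = Z' w}) ->
  {ae P, forall w, restr A (ess_sup P H G1) w = restr A (ess_sup P H G2) w}.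
Proof.
move=> hA hG1 hG2 h12 h21.
have := ess_sup_restr_le hA hG1 hG2 h12.
have := ess_sup_restr_le hA hG2 hG1 h21.
apply: filterS2 => w le21 le12; rewrite /restr; case: pselect => // Aw.
by apply/eqP; rewrite eq_le le12 // le21.
Qed.


Lemma eadd0x0 (x : \bar R) : eadd0 x 0 = x.
Proof. by case: x => [r| |] //=; rewrite adde0. Qed.

Lemma eadd00x (x : \bar R) : eadd0 0 x = x.
Proof. by case: x => [r| |] //=; rewrite add0e. Qed.

Lemma glueE (A : set Omega) X Y w :
  glue A X Y w = if pselect (A w) then X w else Y w.
Proof.
rewrite /glue /restr; case: pselect => Aw; case: pselect => nAw; cbv iota.
- by exfalso; apply: nAw.
- by rewrite eadd0x0.
- by rewrite eadd00x.
- by exfalso; apply: nAw.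
Qed.

Lemma L0F_if (A : set Omega) X Y : H A -> L0F X -> L0F Y ->
  L0F (fun w => if pselect (A w) then X w else Y w).
Proof.
case: hH => _ HF _ hA mX mY _ B mB; rewrite setTI.
have mA : measurable A by exact: HF.
rewrite (_ : _ @^-1` B = (A `&` (X @^-1` B)) `|` (~` A `&` (Y @^-1` B))).
  apply: measurableU; apply: measurableI => //.
  - by have := mX measurableT B mB; rewrite setTI.
  - exact: measurableC.
  - by have := mY measurableT B mB; rewrite setTI.
apply/seteqP; split => w /=.
  by case: pselect => Aw Bw; [left|right].
by case=> -[Aw Bw]; case: pselect.
Qed.

Lemma L0F_decomposable : decomposable H (@L0F d Omega R).
Proof.
move=> X Y A mX mY hA.
have -> : glue A X Y = (fun w => if pselect (A w) then X w else Y w).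
  by apply/funext => w; exact: glueE.
exact: L0F_if.
Qed.

Lemma key_glue D I (c : \bar R) (A : set Omega) Z :
  cond_indicator P H D I -> regular P H D I -> H A -> D Z ->
  D (glue A Z (fun _ => c)) /\
  {ae P, forall w, A w -> I Z w = I (glue A Z (fun _ => c)) w}.
Proof.
move=> [D0 _ _ _ Dadd] [decD regI] hA DZ.
have Dc : D (fun _ => c).
  have -> : (fun _ : Omega => c) =
     (fun w => eadd0 ((fun _ : Omega => 0) w) ((fun _ : Omega => c) w)).
    by apply/funext => w; rewrite eadd00x.
  exact: Dadd D0 (Gmeas_cst c).
have DZ' := decD _ _ _ DZ Dc hA.
split => //.
have := regI _ _ _ DZ DZ' hA (aeW _ _).
have H1 : forall w, restr A Z w = restr A (glue A Z (fun _ => c)) w.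
  by move=> w; rewrite /restr glueE; case: pselect.
move=> /(_ H1); apply: filterS => w + Aw.
by rewrite /restr; case: pselect.
Qed.


Lemma IL_regular D I : cond_indicator P H D I -> regular P H D I ->
  regular P H (@L0F d Omega R) (IL P H D I).
Proof.
move=> ciI regI; split; first exact: L0F_decomposable.
have mI : forall Z, D Z -> Gmeas H (I Z) by case: ciI.
have key : forall X Y A, H A ->
    {ae P, forall w, restr A X w = restr A Y w} ->
    forall Z, [set I Y0 | Y0 in [set Y0 | D Y0 /\ {ae P, forall w, Y0 w <= X w}]] Z ->
    exists2 Z', [set I Y0 | Y0 in [set Y0 | D Y0 /\ {ae P, forall w, Y0 w <= Y w}]] Z' &
      {ae P, forall w, A w -> Z w = Z' w}.
  move=> X Y A hA eqXY _ [Z [DZ ZX] <-].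
  have [DZ' eqZ] := key_glue (-oo) ciI regI hA DZ.
  exists (I (glue A Z (fun _ => -oo))) => //.
  exists (glue A Z (fun _ => -oo)) => //; split => //.
  apply: filterS2 ZX eqXY => w ZXw eqw; rewrite glueE; case: pselect => Aw.
    by move: eqw; rewrite /restr; case: pselect => // _ /= <-.
  by rewrite leNye.
move=> X Y A mX mY hA eqXY; apply: ess_sup_restr_eq => //.
- by move=> _ [Z [DZ _] <-]; exact: mI.
- by move=> _ [Z [DZ _] <-]; exact: mI.
- exact: key.
- apply: key => //; apply: filterS eqXY => w ->//.
Qed.

Lemma IU_regular D I : cond_indicator P H D I -> regular P H D I ->
  regular P H (@L0F d Omega R) (IU P H D I).
Proof.
move=> ciI regI; split; first exact: L0F_decomposable.
have mI : forall Z, D Z -> Gmeas H (I Z) by case: ciI.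
have key : forall X Y A, H A ->
    {ae P, forall w, restr A X w = restr A Y w} ->
    forall Z, [set (fun v => - X0 v) | X0 in
       [set I Y0 | Y0 in [set Y0 | D Y0 /\ {ae P, forall w, X w <= Y0 w}]]] Z ->
    exists2 Z', [set (fun v => - X0 v) | X0 in
       [set I Y0 | Y0 in [set Y0 | D Y0 /\ {ae P, forall w, Y w <= Y0 w}]]] Z' &
      {ae P, forall w, A w -> Z w = Z' w}.
  move=> X Y A hA eqXY _ [_ [Z [DZ ZX] <-] <-].
  have [DZ' eqZ] := key_glue (+oo) ciI regI hA DZ.
  exists (fun v => - I (glue A Z (fun _ => +oo)) v).
    exists (I (glue A Z (fun _ => +oo))) => //.
    exists (glue A Z (fun _ => +oo)) => //; split => //.
    apply: filterS2 ZX eqXY => w ZXw eqw; rewrite glueE; case: pselect => Aw.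
      by move: eqw; rewrite /restr; case: pselect => // _ /= <-.
    by rewrite leey.
  by apply: filterS eqZ => w h Aw; rewrite h.
move=> X Y A mX mY hA eqXY.
have : {ae P, forall w, restr A (ess_sup P H
     [set (fun v => - X0 v) | X0 in
       [set I Y0 | Y0 in [set Y0 | D Y0 /\ {ae P, forall w, X w <= Y0 w}]]]) w =
   restr A (ess_sup P H [set (fun v => - X0 v) | X0 in
       [set I Y0 | Y0 in [set Y0 | D Y0 /\ {ae P, forall w, Y w <= Y0 w}]]]) w}.
  apply: ess_sup_restr_eq => //.
  - by move=> _ [_ [Z [DZ _] <-] <-]; apply: GmeasN; exact: mI.
  - by move=> _ [_ [Z [DZ _] <-] <-]; apply: GmeasN; exact: mI.
  - exact: key.
  - apply: key => //; apply: filterS eqXY => w ->//.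
apply: filterS => w; rewrite /restr /IU /ess_inf; case: pselect => // _ /= ->.
by [].
Qed.

End S.

Theorem mainTheorem8 (d : measure_display) (Omega : measurableType d) (R : realType)
    (P : probability Omega R) (H : set (set Omega))
    (D : set (Omega -> \bar R)) (I : (Omega -> \bar R) -> (Omega -> \bar R)) :
  F_complete P -> complete_sub_sigma P H ->
  cond_indicator P H D I -> increasing P D I -> regular P H D I ->
  regular P H (@L0F d Omega R) (IL P H D I) /\
  regular P H (@L0F d Omega R) (IU P H D I).
Proof.
move=> _ hH ciI _ regI; split; [exact: IL_regular|exact: IU_regular].
Qed.
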